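(* Let $\mathcal B$ be a connected building set on $[n+1]$ whose nested set complex $K_{\mathcal B}$ is a flag complex, and let $I\subseteq[n+1]$ have even cardinality. If the restricted building set $\mathcal B|_I$ has a connected component of odd cardinality, then $K^{\mathrm{odd}}_{\mathcal B|_I}$ is contractible (indeed a cone).
   Context: A building set on a finite set $S\subset\mathbb N$ is a collection $\mathcal B$ of nonempty subsets of $S$ containing every singleton, such that $I,J\in\mathcal B$, $I\cap J\neq\emptyset$ imply $I\cup J\in\mathcal B$; its connected components are its inclusion-maximal elements; it is connected if $S\in\mathcal B$; $\mathcal B|_I=\{J\in\mathcal B:J\subseteq I\}$. For a connected building set $\mathcal B$ on $[n+1]$, the nested set complex $K_{\mathcal B}$ is the simplicial complex on vertex set $\mathcal B\setminus\{[n+1]\}$ whose simplices are the subsets $N\subseteq\mathcal B\setminus\{[n+1]\}$ such that (i) any $I,J\in N$ satisfy $I\subseteq J$, $J\subseteq I$ or $I\cap J=\emptyset$, and (ii) for any $r\ge2$ pairwise disjoint $I_1,\dots,I_r\in N$, $I_1\cup\dots\cup I_r\notin\mathcal B$. A simplicial complex is flag if every set of vertices that are pairwise joined by edges forms a simplex. For $I\subseteq[n+1]$ of even cardinality, $K^{\mathrm{odd}}_{\mathcal B|_I}$ is the full subcomplex of $K_{\mathcal B}$ induced on the vertices $J\in\mathcal B$ with $J\subseteq I$ and $|J|$ odd. *)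

(* Defs.v *)
(* The ground set [n+1] is modelled by the finite type 'I_n.+1
   (a relabelling of {1,...,n+1}). *)
From mathcomp Require Import all_boot all_order.
Set Implicit Arguments. Unset Strict Implicit. Unset Printing Implicit Defensive.

Section BuildingSets.
Variable T : finType.
Implicit Types (B : {set {set T}}) (I J : {set T}) (N : {set {set T}}).

Definition building_set B : Prop :=
  (forall J, J \in B -> J != set0) /\
  (forall x : T, [set x] \in B) /\
  (forall I J, I \in B -> J \in B -> I :&: J != set0 -> I :|: J \in B).

Definition connected_bs B : Prop := [set: T] \in B.

Definition restrict B I : {set {set T}} := [set J in B | J \subset I].

Definition component B J : Prop :=
  J \in B /\ (forall J', J' \in B -> J \subset J' -> J' = J).

Definition nvertices B : {set {set T}} := B :\ [set: T].

Definition nested B N : Prop :=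
  N \subset nvertices B /\
  (forall I J, I \in N -> J \in N ->
      [|| I \subset J, J \subset I | [disjoint I & J]]) /\
  (forall M : {set {set T}}, M \subset N -> 2 <= #|M| ->
      (forall I J, I \in M -> J \in M -> I != J -> [disjoint I & J]) ->
      \bigcup_(J in M) J \notin B).

Definition flag_nested B : Prop :=
  forall N, N \subset nvertices B ->
    (forall I J, I \in N -> J \in N -> nested B [set I; J]) ->
    nested B N.

Definition odd_vertices B I : {set {set T}} :=
  [set J in nvertices B | (J \subset I) && odd #|J|].

Definition odd_simplex B I N : Prop :=
  nested B N /\ N \subset odd_vertices B I.

Definition is_cone (V : {set {set T}}) (simp : {set {set T}} -> Prop) : Prop :=
  exists2 v, v \in V & forall N, simp N -> simp (v |: N).

End BuildingSets.

(* Main.v *)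
Require Import Defs.
From mathcomp Require Import all_boot all_order.

Section H.
Variable T : finType.
Implicit Types (B : {set {set T}}) (I J C : {set T}) (N : {set {set T}}).

Lemma nested_sub B N N' : nested B N -> N' \subset N -> nested B N'.
Proof.
move=> [h1 [h2 h3]] s; split; first exact: subset_trans s h1.
split.
  by move=> I J /(subsetP s) HI /(subsetP s) HJ; apply: h2.
by move=> M sM; apply: h3; apply: subset_trans s.
Qed.

Lemma pair_ok B I C J : building_set B -> component (restrict B I) C ->
  C \in nvertices B -> J \in nvertices B -> J \subset I -> nested B [set C; J].
Proof.
move=> [ne [_ un]] [CB Cmax] Cv Jv JI.
have CBB : C \in B by move: CB; rewrite inE => /andP[].
have CI : C \subset I by move: CB; rewrite inE => /andP[].
have JB : J \in B by move: Jv; rewrite inE => /andP[].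
have key : C :&: J != set0 -> J \subset C.
  move=> h; have U : C :|: J \in B by apply: un.
  have : C :|: J = C.
    apply: Cmax; first by rewrite inE U subUset CI JI.
    exact: subsetUl.
  by move=> e; rewrite -e subsetUr.
split.
  by rewrite subUset !sub1set Cv Jv.
split.
  move=> X Y; rewrite !inE => /orP[] /eqP -> /orP[] /eqP ->;
    rewrite ?subxx //.
    case: (boolP (C :&: J == set0)) => h.
      by rewrite -setI_eq0 h !orbT.
    by rewrite key ?orbT.
  case: (boolP (C :&: J == set0)) => h.
    by rewrite -setI_eq0 setIC h !orbT.
  by rewrite key.
move=> M sM cM dM.
have c2 : 2 <= #|[set C; J]| by apply: leq_trans cM (subset_leq_card sM).
have CJ : C != J by move: c2; rewrite cards2; case: (C != J).
have eM : M = [set C; J].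
  by apply/eqP; rewrite eqEcard sM (leq_trans _ cM) // cards2 CJ.
subst M.
have dj : [disjoint C & J] by apply: dM; rewrite ?inE ?eqxx ?orbT.
have -> : \bigcup_(K in [set C; J]) K = C :|: J.
  rewrite big_setU1 /= ?inE // big_set1 //.
apply/negP=> U.
have e : C :|: J = C.
  apply: Cmax; first by rewrite inE U subUset CI JI.
  exact: subsetUl.
have JC : J \subset C by rewrite -e subsetUr.
move: (ne J JB); rewrite -(setIidPr JC) setI_eq0 dj //.
Qed.

End H.
Arguments pair_ok {T B I C J}.
Arguments nested_sub {T B N N'}.

Theorem lemma5p3 (n : nat) (B : {set {set 'I_n.+1}}) (I : {set 'I_n.+1}) :
  building_set B -> connected_bs B -> flag_nested B ->
  ~~ odd #|I| ->
  (exists2 C, component (restrict B I) C & odd #|C|) ->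
  is_cone (odd_vertices B I) (odd_simplex B I).
Proof.
move=> bs _ fl evI [C comp oC].
have [CB _] := comp.
have CBB : C \in B by move: CB; rewrite inE => /andP[].
have CI : C \subset I by move: CB; rewrite inE => /andP[].
have CT : C != setT.
  apply/eqP=> e; move: CI; rewrite e subTset => /eqP eI.
  by move: evI oC; rewrite e eI => /negP.
have Cv : C \in nvertices B by rewrite !inE CT CBB.
have Co : C \in odd_vertices B I by rewrite inE Cv CI oC.
exists C => // N [nN sN]; split; last by rewrite subUset sub1set Co sN.
have sNv : N \subset nvertices B by case: nN.
have Jprop : forall J, J \in N -> J \in nvertices B /\ J \subset I.
  move=> J /(subsetP sN); rewrite inE => /andP[-> /andP[-> _]] //.
apply: fl; first by rewrite subUset sub1set Cv sNv.
move=> X Y; rewrite !inE => /orP[/eqP ->|XN] /orP[/eqP ->|YN].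
- by rewrite setUid; apply: (nested_sub (pair_ok bs comp Cv Cv CI));
    rewrite setUid subxx.
- by have [Yv YI] := Jprop _ YN; exact: pair_ok bs comp Cv Yv YI.
- by have [Xv XI] := Jprop _ XN; rewrite setUC; exact: pair_ok bs comp Cv Xv XI.
- by apply: nested_sub nN _; apply/subsetP=> z; rewrite !inE => /orP[] /eqP ->.
Qed.
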